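(* Let $A$ be a Noetherian commutative ring with identity, let $A[\mathbf{x}]=A[x_1,\ldots,x_n]$ be equipped with a monomial order, let $I\subset A[\mathbf{x}]$ be an ideal, let $X=\mathrm{Spec}(A/(I\cap A))$ and $Y=\mathrm{Spec}(A[\mathbf{x}]/I)$. If $I\cap A$ is a prime ideal and each coefficient ideal $\mathrm{in}(I)_{x_i}\neq I\cap A$ ($i=1,\ldots,n$), then the morphism of schemes $Y\to X$ induced by $A/(I\cap A)\to A[\mathbf{x}]/I$ is an isomorphism over a nonempty open subset of $X$.
   Context: A monomial order $>$ is a total order on monomials such that $\mathbf{x}^E>\mathbf{x}^F$ implies $\mathbf{x}^G\mathbf{x}^E>\mathbf{x}^G\mathbf{x}^F$, and $x_i>1$ for each $i$. $\mathrm{in}(f)$ is the greatest term $c\,\mathbf{x}^E$ ($c\neq0$) of a nonzero polynomial $f$; $\mathrm{in}(I)$ is the ideal generated by all $\mathrm{in}(f)$, $f\in I$. For an ideal $J\subset A[\mathbf{x}]$ and monomial $\mathbf{x}^E$, the coefficient ideal is $J_{\mathbf{x}^E}=(c\in A\mid c\,\mathbf{x}^E\in J)\subset A$; $J_{x_i}$ is the coefficient ideal for the monomial $x_i$. *)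

(* Defs.v *)
From HB Require Import structures.
From mathcomp Require Import all_boot all_order all_algebra.
From mathcomp Require Import mpoly.
Set Implicit Arguments. Unset Strict Implicit. Unset Printing Implicit Defensive.
Import Order.TTheory GRing.Theory.
Local Open Scope ring_scope.

Definition is_ideal (R : comNzRingType) (I : R -> Prop) : Prop :=
  [/\ I 0,
      (forall x y, I x -> I y -> I (x + y)) &
      (forall r x, I x -> I (r * x))].

Definition is_prime_ideal (R : comNzRingType) (P : R -> Prop) : Prop :=
  [/\ is_ideal P, ~ P 1 &
      (forall a b, P (a * b) -> P a \/ P b)].

Definition ideal_gen (R : comNzRingType) (S : R -> Prop) : R -> Prop :=
  fun x => exists (k : nat) (r s : 'I_k -> R),
    (forall i, S (s i)) /\ x = \sum_(i < k) r i * s i.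

Definition noetherian (R : comNzRingType) : Prop :=
  forall I : R -> Prop, is_ideal I ->
    exists s : seq R, forall x, I x <-> ideal_gen (fun y => y \in s) x.

Definition monomial_order (n : nat) (le : rel 'X_{1..n}) : Prop :=
  (forall E, le E E) /\
  [/\ (forall E F, le E F -> le F E -> E = F),
      (forall E F G, le E F -> le F G -> le E G),
      (forall E F, le E F || le F E),
      (forall E F G, le F E -> E != F -> le (G + F)%MM (G + E)%MM && ((G + E)%MM != (G + F)%MM)) &
      (forall i : 'I_n, le 0%MM (mnm1 i) && ((mnm1 i) != 0%MM))].

Definition initial_term (A : comNzRingType) (n : nat) (le : rel 'X_{1..n})
    (f t : {mpoly A[n]}) : Prop :=
  f != 0 /\ exists E, [/\ E \in msupp f,
      (forall F, F \in msupp f -> le F E) & t = f@_E *: 'X_[E]].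

Definition initial_ideal (A : comNzRingType) (n : nat) (le : rel 'X_{1..n})
    (I : {mpoly A[n]} -> Prop) : {mpoly A[n]} -> Prop :=
  ideal_gen (fun t => exists f, I f /\ initial_term le f t).

Definition coeff_ideal (A : comNzRingType) (n : nat) (J : {mpoly A[n]} -> Prop)
    (E : 'X_{1..n}) : A -> Prop :=
  fun c => J (c *: 'X_[E]).

Definition contraction (A : comNzRingType) (n : nat) (I : {mpoly A[n]} -> Prop) :
  A -> Prop := fun a => I a%:MP.

(* Y = Spec(A[x]/I) -> X = Spec(A/P), P = I \cap A, is an isomorphism over the
   basic open D(f) of X, i.e. the induced ring map
     (A/P)_f --> (A[x]/I)_f
   is bijective. Written out elementwise:
   - injective: a/f^k maps to 0 iff f^m a in I for some m; then a/f^k = 0 in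
     (A/P)_f, i.e. f^m' a in P for some m';
   - surjective: every g/f^j is the image of some a/f^k, i.e.
     f^m (f^k g - f^j a) in I for some m. *)
Definition iso_over_basic_open (A : comNzRingType) (n : nat)
    (I : {mpoly A[n]} -> Prop) (f : A) : Prop :=
  (forall a : A, (exists m : nat, I (f ^+ m * a)%:MP) ->
                 exists m : nat, contraction I (f ^+ m * a)) /\
  (forall (g : {mpoly A[n]}) (j : nat), exists (a : A) (k m : nat),
       I ((f ^+ m)%:MP * ((f ^+ k) *: g - (f ^+ j * a)%:MP))).

(* Main.v *)
Require Import Defs.
From HB Require Import structures.
From mathcomp Require Import all_boot all_order all_algebra.
From mathcomp Require Import mpoly.
From mathcomp Require Import ring.
From Stdlib Require Import Classical ClassicalEpsilon.
Set Implicit Arguments. Unset Strict Implicit. Unset Printing Implicit Defensive.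
Import Order.TTheory GRing.Theory.
Local Open Scope ring_scope.

Section Good.
Variables (A : comNzRingType) (n : nat) (I : {mpoly A[n]} -> Prop).
Hypothesis HI : is_ideal I.

Lemma I0 : I 0. Proof. by case: HI. Qed.
Lemma ID x y : I x -> I y -> I (x + y). Proof. by case: HI => _ H _; apply: H. Qed.
Lemma IM r x : I x -> I (r * x). Proof. by case: HI => _ _ H; apply: H. Qed.
Lemma IMr r x : I x -> I (x * r). Proof. by rewrite mulrC; apply: IM. Qed.
Lemma IN x : I x -> I (- x). Proof. by move=> h; rewrite -mulN1r; apply: IM. Qed.
Lemma IB x y : I x -> I y -> I (x - y). Proof. by move=> h1 h2; apply: ID => //; apply: IN. Qed.

Variable f : A.
Definition good (p : {mpoly A[n]}) :=
  exists N b, I ((f ^+ N)%:MP * p - b%:MP).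

Lemma good_C c : good c%:MP.
Proof. exists 0%N, c; rewrite expr0 mpolyC1 mul1r subrr; exact: I0. Qed.

Lemma good_D p q : good p -> good q -> good (p + q).
Proof.
move=> [N [b h1]] [M [c h2]]; exists (N + M)%N, (f ^+ M * b + f ^+ N * c).
have -> : (f ^+ (N + M))%:MP * (p + q) - (f ^+ M * b + f ^+ N * c)%:MP =
  (f ^+ M)%:MP * ((f ^+ N)%:MP * p - b%:MP) + (f ^+ N)%:MP * ((f ^+ M)%:MP * q - c%:MP).
  rewrite exprD !rmorphD !rmorphM /=. ring.
by apply: ID; apply: IM.
Qed.

Lemma good_M p q : good p -> good q -> good (p * q).
Proof.
move=> [N [b h1]] [M [c h2]]; exists (N + M)%N, (b * c).
have -> : (f ^+ (N + M))%:MP * (p * q) - (b * c)%:MP =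
  ((f ^+ N)%:MP * p - b%:MP) * ((f ^+ M)%:MP * q) + b%:MP * ((f ^+ M)%:MP * q - c%:MP).
  rewrite exprD !rmorphM /=. ring.
by apply: ID; [apply: IMr | apply: IM].
Qed.

Lemma good_X p k : good p -> good (p ^+ k).
Proof.
move=> h; elim: k => [|k ih]; first by rewrite expr0 -mpolyC1; apply: good_C.
by rewrite exprS; apply: good_M.
Qed.

Lemma good_poly p :
  (forall m, m \in msupp p -> forall j : 'I_n, (0 < m j)%N -> good 'X_j) -> good p.
Proof.
move=> H; rewrite (mpolyE p) big_seq.
apply: (big_ind good); first by rewrite -mpolyC0; apply: good_C.
  exact: good_D.
move=> m /H Hm; rewrite -mul_mpolyC; apply: good_M; first exact: good_C.
rewrite mpolyXE_id; apply: (big_ind good).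
- by rewrite -mpolyC1; apply: good_C.
- exact: good_M.
move=> j _; case: (posnP (m j)) => [->|hj]; last by apply: good_X; apply: Hm.
by rewrite expr0 -mpolyC1; apply: good_C.
Qed.

End Good.

Section MO.
Variables (n : nat) (le : rel 'X_{1..n}).
Hypothesis Hle : monomial_order le.

Lemma le_refl E : le E E. Proof. by case: Hle. Qed.
Lemma le_anti E F : le E F -> le F E -> E = F. Proof. by case: Hle => _ [h _ _ _ _]; apply: h. Qed.
Lemma le_trans E F G : le E F -> le F G -> le E G. Proof. by case: Hle => _ [_ h _ _ _]; apply: h. Qed.
Lemma le_comp E F G : le F E -> E != F -> le (G + F)%MM (G + E)%MM.
Proof. by case: Hle => _ [_ _ _ h _] h1 h2; case/andP: (h _ _ G h1 h2). Qed.
Lemma le_U i : le 0%MM U_(i)%MM. Proof. by case: Hle => _ [_ _ _ _ h]; case/andP: (h i). Qed.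

Lemma le0 E : le 0%MM E.
Proof.
move: {2}(mdeg E) (erefl (mdeg E)) => k; elim: k E => [|k ih] E hE.
  by move: hE => /eqP; rewrite mdeg_eq0 => /eqP ->; apply: le_refl.
have : E != 0%MM by rewrite -mdeg_eq0 hE.
have [i hi] : exists i, (0 < E i)%N.
  apply/existsP; apply: contraT; rewrite negb_exists => /forallP h.
  by move: hE; rewrite mdegE big1 // => j _; apply/eqP; rewrite -leqn0 leqNgt h.
have hle : (U_(i) <= E)%MM by apply/mnm_lepP => j; rewrite mnm1E; case: eqP => // <-.
set E' := (E - U_(i))%MM.
have hE' : E = (E' + U_(i))%MM by rewrite submK.
have : le 0%MM E'.
  apply: ih; move: hE; rewrite hE' mdegD mdeg1 addn1; by case.
move=> h0 _; apply: (le_trans h0); rewrite hE'.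
have := le_comp E' (le_U i) (negbT (mnm1_eq0 i)).
by rewrite addm0.
Qed.
Lemma leU (F : 'X_{1..n}) j : (0 < F j)%N -> le U_(j)%MM F.
Proof.
move=> hj.
have hle : (U_(j) <= F)%MM by apply/mnm_lepP => k; rewrite mnm1E; case: eqP => // <-.
set F' := (F - U_(j))%MM.
have hF : F = (U_(j) + F')%MM by rewrite addmC submK.
rewrite hF; case: (eqVneq F' 0%MM) => [->|h]; first by rewrite addm0; apply: le_refl.
by have := le_comp U_(j) (le0 F') h; rewrite addm0.
Qed.

Definition ltv (j i : 'I_n) := le U_(j)%MM U_(i)%MM && (j != i).

Lemma ltv_card j i : ltv j i -> (#|[set k | ltv k j]| < #|[set k | ltv k i]|)%N.
Proof.
move=> /andP [hji nji]; apply: proper_card; apply/properP; split.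
  apply/subsetP => k; rewrite !inE => /andP [hkj nkj]; rewrite /ltv (le_trans hkj hji) /=.
  apply/eqP => eki; subst k.
  by move/eqP: nkj; apply; apply/eqP; rewrite -eq_mnm1; apply/eqP; apply: le_anti.
exists j; rewrite !inE /ltv ?hji ?nji //= eqxx andbF //.
Qed.

Lemma ltv_ind (Q : 'I_n -> Prop) :
  (forall i, (forall j, ltv j i -> Q j) -> Q i) -> forall i, Q i.
Proof.
move=> H i; move: {2}#|[set k | ltv k i]| (leqnn #|[set k | ltv k i]|) => N.
elim: N i => [|N ih] i hi; apply: H => j hj; have := ltv_card hj.
  by move=> h; move: (leq_trans h hi).
by move=> h; apply: ih; rewrite -ltnS; apply: leq_trans h hi.
Qed.
End MO.

Lemma extract (A : comNzRingType) (n : nat) (le : rel 'X_{1..n})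
    (I : {mpoly A[n]} -> Prop) (Hle : monomial_order le) (HI : is_ideal I)
    (HP : is_prime_ideal (contraction I)) (i : 'I_n) (c : A) :
  ~ (coeff_ideal (initial_ideal le I) (mnm1 i) c <-> contraction I c) ->
  exists g, [/\ I g, ~ contraction I (g@_U_(i)) &
                 forall F, F \in msupp g -> le F U_(i)%MM].
Proof.
move=> Hn.
set P := contraction I.
have [[P0 PD PM] _ _] := HP.
have sub : P c -> coeff_ideal (initial_ideal le I) (mnm1 i) c.
  move=> Pc; rewrite /coeff_ideal /initial_ideal.
  case: (eqVneq c 0) => [->|nc].
    exists 0%N, (fun _ => 0), (fun _ => 0); split; first by case.
    by rewrite scale0r big_ord0.
  exists 1%N, (fun _ => 1), (fun _ => c *: 'X_[U_(i)]); split; last first.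
    by rewrite big_ord1 mul1r.
  move=> _; exists (c *: 'X_[U_(i)]); split.
    by rewrite -mul_mpolyC mulrC; apply: IM.
  split.
    apply/eqP => h; have := congr1 (mcoeff U_(i)) h.
    by rewrite mcoeffZ mcoeffX eqxx mulr1 mcoeff0; apply/eqP.
  exists U_(i)%MM; split; rewrite ?msuppMCX ?inE //.
    by move=> F; rewrite inE => /eqP ->; apply: le_refl.
  by rewrite mcoeffZ mcoeffX eqxx mulr1.
have hc : coeff_ideal (initial_ideal le I) (mnm1 i) c.
  apply: NNPP => h; apply: Hn; split => [/h //|]; exact: sub.
have nPc : ~ P c by move=> pc; apply: Hn; split => // _.
apply: NNPP => Hno; apply: nPc.
case: hc => k [r [s [Hs Heq]]].
have -> : c = (c *: 'X_[U_(i)])@_U_(i) by rewrite mcoeffZ mcoeffX eqxx mulr1.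
rewrite Heq raddf_sum; apply: (big_ind P) => // l _.
case: (Hs l) => g [Ig [gnz [E [EinS Emax ->]]]].
rewrite -scalerAr /= mcoeffZ.
case: (eqVneq ((r l * 'X_[E])@_U_(i)) 0) => [->|nz]; first by rewrite mulr0.
rewrite mulrC; apply: PM.
have : U_(i)%MM \in msupp (r l * 'X_[E]) by rewrite mcoeff_msupp.
rewrite (perm_mem (msuppMX _ _)) => /mapP [m' _ hU].
have := congr1 mdeg hU; rewrite mdeg1 mdegD.
case hE: (mdeg E) => [|[|kk]] h.
- move/eqP: hE; rewrite mdeg_eq0 => /eqP hE0; subst E.
  have hg : g = (g@_0%MM)%:MP.
    apply/mpolyP => m; rewrite mcoeffC.
    case: (eqVneq m 0%MM) => [->|nm]; first by rewrite mulr1.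
    rewrite mulr0; apply/memN_msupp_eq0; apply/negP => hm; move/eqP: nm; apply.
    by apply: (le_anti Hle); [apply: Emax | apply: le0].
  by rewrite /P /contraction -hg.
- have : mdeg m' == 0%N by move: h; rewrite add1n => -[->].
  rewrite mdeg_eq0 => /eqP hm'; subst m'; rewrite addm0 in hU; subst E.
  apply: NNPP => nPa; apply: Hno; exists g; split => //.
- by move: h; rewrite !addSn.
Qed.

Theorem corollary5p2 (A : comNzRingType) (n : nat) (le : rel 'X_{1..n})
    (I : {mpoly A[n]} -> Prop) :
  noetherian A ->
  monomial_order le ->
  is_ideal I ->
  is_prime_ideal (contraction I) ->
  (forall i : 'I_n,
     exists c : A, ~ (coeff_ideal (initial_ideal le I) (mnm1 i) c
                      <-> contraction I c)) ->
  exists f : A, ~ contraction I f /\ iso_over_basic_open I f.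
Proof.
move=> _ Hle HI HP Hc.
have Hg : forall i : 'I_n, exists g, [/\ I g, ~ contraction I (g@_U_(i)) &
                 forall F, F \in msupp g -> le F U_(i)%MM].
  by move=> i; case: (Hc i) => c hc; apply: extract hc.
pose gf i := proj1_sig (constructive_indefinite_description _ (Hg i)).
have Hgf i : [/\ I (gf i), ~ contraction I ((gf i)@_U_(i)) &
                 forall F, F \in msupp (gf i) -> le F U_(i)%MM].
  exact: proj2_sig (constructive_indefinite_description _ (Hg i)).
pose d i := (gf i)@_U_(i).
pose f := \prod_i d i.
have [[P0 PD PM] P1 Pp] := HP.
have nPf : ~ contraction I f.
  apply: (big_ind (fun x => ~ contraction I x)) => //.
    by move=> x y hx hy /Pp [].
  by move=> i _; case: (Hgf i).
exists f; split => //; split.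
  by move=> a [m h]; exists m.
have goodX : forall i, good I f 'X_i.
  apply: (ltv_ind Hle) => i IH.
  case: (Hgf i) => Ig nPd Hmax.
  pose h := gf i - d i *: 'X_i.
  have gh : good I f h.
    apply: good_poly => // m hm j hj; apply: IH.
    have hmU : m != U_(i)%MM.
      apply/eqP => e; move: hm; rewrite e mcoeff_msupp mcoeffB mcoeffZ mcoeffX eqxx mulr1.
      by rewrite /d subrr eqxx.
    have hmg : m \in msupp (gf i).
      have hUm : (U_(i)%MM == m) = false by rewrite eq_sym (negbTE hmU).
      move: hm; rewrite !mcoeff_msupp mcoeffB mcoeffZ mcoeffX hUm.
      by rewrite mulr0 subr0.
    have lm := Hmax _ hmg.
    have lj := leU Hle hj.
    rewrite /ltv (le_trans Hle lj lm) /=.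
    apply/eqP => eji; subst j.
    by move/eqP: hmU; apply; apply: (le_anti Hle).
  case: gh => N [b hb].
  pose e := \prod_(j | j != i) d j.
  have he : f = d i * e by rewrite /f (bigD1 i).
  exists N.+1, (- (e * b)).
  have -> : (f ^+ N.+1)%:MP * 'X_i - (- (e * b))%:MP =
     e%:MP * ((f ^+ N)%:MP * gf i) - e%:MP * ((f ^+ N)%:MP * h - b%:MP).
    rewrite /h exprS rmorphM {1}he rmorphN !rmorphM /= -mul_mpolyC.
    ring.
  by apply: IB => //; apply: IM => //; apply: IM.
move=> g j.
have [N [b hb]] : good I f g by apply: good_poly => // m _ k _; apply: goodX.
exists b, (N + j)%N, 0%N; rewrite expr0 mpolyC1 mul1r.
have -> : f ^+ (N + j) *: g - (f ^+ j * b)%:MP =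
          (f ^+ j)%:MP * ((f ^+ N)%:MP * g - b%:MP).
  by rewrite -mul_mpolyC exprD !rmorphM /=; ring.
exact: IM.
Qed.
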